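(* Let $A=KQ/I$ be a connected finite-dimensional quiver algebra of finite global dimension whose vertices are labelled $1,\dots,n$ so that the Cartan matrix $\phi_A$ is lower triangular. Let $\phi_A=\hat U_1 Q\hat U_2$ be a Bruhat decomposition of $\phi_A$. Then the Coxeter permutation $p_A$ of $A$ equals the row-permutation associated to the permutation matrix $Q$.
   Context: The Cartan matrix $\phi_A$ is the $n\times n$ integer matrix with entries $\phi_{i,j}=\dim_K e_jAe_i$ (the number of nonzero paths from $j$ to $i$ in a basis of paths). For finite global dimension, $\det\phi_A=\pm1$, and the Coxeter matrix is $C_A=-\phi_A^{T}\phi_A^{-1}$. A Bruhat decomposition of an invertible matrix $M$ (over $\mathbb{Q}$) is a factorisation $M=U_1PU_2$ with $U_1,U_2$ invertible upper triangular and $P$ a permutation matrix; $P$ is uniquely determined by $M$. For a permutation matrix $P$, the row-permutation $p_r$ is given by $p_r(i)=j$ if the nonzero entry of row $i$ of $P$ is in column $j$; the column-permutation $p_c$ is given by $p_c(i)=j$ if the nonzero entry of column $i$ is in row $j$. The Coxeter permutation $p_A$ is the column-permutation of the permutation matrix $P$ in a Bruhat decomposition $C_A=U_1PU_2$. *)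

(* Defs.v *)
From HB Require Import structures.
From mathcomp Require Import all_boot all_order all_algebra all_fingroup.
Set Implicit Arguments. Unset Strict Implicit. Unset Printing Implicit Defensive.
Import Order.TTheory GRing.Theory Num.Theory.
Local Open Scope ring_scope.

(* A Cartan matrix phi : 'M[nat]_n, phi i j = dim_K e_j A e_i, viewed over Q. *)
Definition cartanQ (n : nat) (phi : 'M[nat]_n) : 'M[rat]_n :=
  map_mx (fun k : nat => k%:R) phi.

Definition lower_tri_nat (n : nat) (phi : 'M[nat]_n) : Prop :=
  forall i j : 'I_n, (i < j)%N -> phi i j = 0%N.

Definition coxeter (n : nat) (phi : 'M[nat]_n) : 'M[rat]_n :=
  - ((cartanQ phi)^T *m invmx (cartanQ phi)).

Definition upper_tri (n : nat) (U : 'M[rat]_n) : Prop :=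
  forall i j : 'I_n, (j < i)%N -> U i j = 0.

Definition bruhat_decomp (n : nat) (M U1 P U2 : 'M[rat]_n) : Prop :=
  [/\ upper_tri U1 /\ U1 \in unitmx, upper_tri U2 /\ U2 \in unitmx,
      is_perm_mx P & M = U1 *m P *m U2].

Definition is_row_perm (n : nat) (P : 'M[rat]_n) (p : 'S_n) : Prop :=
  forall i j : 'I_n, (P i j != 0) = (p i == j).

Definition is_col_perm (n : nat) (P : 'M[rat]_n) (p : 'S_n) : Prop :=
  forall i j : 'I_n, (P j i != 0) = (p i == j).

(* Main.v *)
Require Import Defs.
From HB Require Import structures.
From mathcomp Require Import all_boot all_order all_algebra all_fingroup.
Import Order.TTheory GRing.Theory Num.Theory.
Local Open Scope ring_scope.

Section Helpers.
Local Set Implicit Arguments. Local Unset Strict Implicit.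

Definition dg_def n (P : pred 'I_n) : 'M[rat]_n := diag_mx (\row_(k < n) (P k)%:R).
Fact dg_key : unit. Proof. by []. Qed.
Definition dg := locked_with dg_key dg_def.
Arguments dg {n}.
Lemma dgD n : @dg n = @dg_def n. Proof. by rewrite /dg unlock. Qed.

Lemma dgE n (P : pred 'I_n) a b : dg P a b = ((a == b) && P a)%:R.
Proof.
rewrite dgD /dg_def !mxE; case: (P a); case: (a == b) => /=;
  by rewrite ?mulr1n ?mulr0n.
Qed.

Lemma dgM n (P Q : pred 'I_n) : dg P *m dg Q = dg [pred k | P k && Q k].
Proof.
apply/matrixP=> a b; rewrite dgD /dg_def mul_diag_mx !mxE.
case Pa: (P a); case Qa: (Q a); case: (a == b) => /=; rewrite ?Pa ?Qa /=.
all: by rewrite ?mul1r ?mul0r ?mul0rn.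
Qed.

Lemma dg_idem n (P : pred 'I_n) : dg P *m dg P = dg P.
Proof. by rewrite dgM; apply/matrixP=> a b; rewrite !dgE /= andbb. Qed.

Lemma dg_sum n (P : pred 'I_n) : dg P = \sum_(k | P k) delta_mx k k.
Proof.
apply/matrixP=> a b; rewrite dgE summxE.
case Pa: (P a).
  rewrite (bigD1 a) //= big1 ?addr0 => [|k /andP[_ ka]]; rewrite mxE.
  - by rewrite eqxx andbT /= eq_sym.
  - by rewrite eq_sym (negbTE ka).
rewrite andbF big1 // => k Pk; rewrite mxE.
case: eqP => [ak|]; [by rewrite -ak Pa in Pk | by []].
Qed.

Lemma rank_sum_le n (I : finType) (P : pred I) (A : I -> 'M[rat]_n) :
  (\rank (\sum_(i | P i) A i)%R <= \sum_(i | P i) \rank (A i))%N.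
Proof.
apply: (big_ind2 (fun M r => \rank M <= r)%N).
- by rewrite mxrank0.
- move=> M1 r1 M2 r2 h1 h2; apply: leq_trans (mxrank_add M1 M2) _; exact: leq_add.
- by [].
Qed.

Lemma rank_dg_le n (P : pred 'I_n) : (\rank (dg P) <= #|P|)%N.
Proof.
rewrite dg_sum; apply: (leq_trans (rank_sum_le P (fun k => delta_mx k k))).
rewrite (eq_bigr (fun _ => 1%N)); last by move=> k _; exact: mxrank_delta.
by rewrite sum1_card.
Qed.

Lemma rank_dg n (P : pred 'I_n) : \rank (dg P) = #|P|.
Proof.
apply/eqP; rewrite eqn_leq rank_dg_le /=.
have e : 1%:M = dg P + dg (predC P).
  apply/matrixP=> a b; rewrite mxE [RHS]mxE !dgE /=.
  by case: (P a); case: (a == b).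
have h1 : (n <= \rank (dg P) + #|predC P|)%N.
  rewrite -{1}(mxrank1 rat n) e.
  apply: leq_trans (mxrank_add _ _) _; by rewrite leq_add2l rank_dg_le.
have h2 := cardC P; rewrite card_ord in h2.
by rewrite -(leq_add2r #|predC P|) h2.
Qed.

Lemma rank_unitl n (W Y : 'M[rat]_n) : W \in unitmx -> \rank (W *m Y) = \rank Y.
Proof. by move=> hW; rewrite eqmxMfull // row_full_unit. Qed.

Lemma rank_unitr n (W Y : 'M[rat]_n) : W \in unitmx -> \rank (Y *m W) = \rank Y.
Proof. by move=> hW; rewrite mxrankMfree // row_free_unit. Qed.

Lemma perm_mxE' n (s : 'S_n) a b : perm_mx s a b = (s a == b)%:R :> rat.
Proof. by rewrite /perm_mx !mxE. Qed.

Lemma rank_perm n (A B : pred 'I_n) (s : 'S_n) :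
  \rank (dg A *m perm_mx s *m dg B) = #|[pred a | A a && B (s a)]|.
Proof.
rewrite -(rank_unitr (dg A *m perm_mx s *m dg B) (unitmx_perm _ s^-1)).
have e : perm_mx s *m dg B *m perm_mx s^-1 = dg [pred a | B (s a)].
  rewrite -row_permE -col_permE; apply/matrixP=> a b; rewrite !mxE !dgE /=.
  by rewrite (inj_eq perm_inj).
by rewrite -!mulmxA (mulmxA (perm_mx s)) e dgM rank_dg.
Qed.

End Helpers.

Section Helpers2.
Local Set Implicit Arguments. Local Unset Strict Implicit.

Definition Ei n (i : nat) : 'M[rat]_n := dg (fun k : 'I_n => (i <= k)%N).
Definition Fj n (j : nat) : 'M[rat]_n := dg (fun k : 'I_n => (k <= j)%N).

Lemma dgMl n (P : pred 'I_n) (X : 'M[rat]_n) a b : (dg P *m X) a b = (P a)%:R * X a b.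
Proof. by rewrite dgD /dg_def mul_diag_mx !mxE. Qed.

Lemma dgMr n (P : pred 'I_n) (X : 'M[rat]_n) a b : (X *m dg P) a b = X a b * (P b)%:R.
Proof. by rewrite dgD /dg_def mul_mx_diag !mxE. Qed.

Lemma entW n (A : 'M[rat]_n) (P : pred 'I_n) a b :
  (A + (1%:M - dg P)) a b = A a b + ((a == b)%:R - ((a == b) && P a)%:R).
Proof. by rewrite !mxE dgE. Qed.

Lemma upper_det n (U : 'M[rat]_n) : upper_tri U -> \det U = \prod_k U k k.
Proof.
move=> hU; rewrite -det_tr det_trig.
  by apply: eq_bigr => k _; rewrite mxE.
by apply/is_trig_mxP => a b ab; rewrite mxE; apply: hU.
Qed.

Lemma upper_diag_nz n (U : 'M[rat]_n) k :
  upper_tri U -> U \in unitmx -> U k k != 0.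
Proof.
move=> hU; rewrite unitmxE unitfE upper_det // => /prodf_neq0 h; exact: h.
Qed.

Lemma upper_unitP n (U : 'M[rat]_n) :
  upper_tri U -> (forall k, U k k != 0) -> U \in unitmx.
Proof.
move=> hU hd; rewrite unitmxE unitfE upper_det //; apply/prodf_neq0 => k _; exact: hd.
Qed.

Lemma upper1 n : upper_tri (1%:M : 'M[rat]_n).
Proof.
move=> a b ba; rewrite mxE; case: eqP => // ab; by rewrite ab ltnn in ba.
Qed.

Lemma left_eq n (U : 'M[rat]_n) (i : nat) : upper_tri U -> U \in unitmx ->
  exists2 W, W \in unitmx & forall Y : 'M[rat]_n, Ei n i *m (U *m Y) = W *m (Ei n i *m Y).
Proof.
move=> hU uU.
have EU : forall a b, (Ei n i *m U) a b = (i <= a)%:R * U a b.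
  by move=> a b; rewrite dgMl.
have EUE : Ei n i *m U *m Ei n i = Ei n i *m U.
  apply/matrixP=> a b; rewrite dgMr EU.
  case: (leqP i b) => hb; first by rewrite mulr1.
  rewrite mulr0; case: (leqP i a) => ha; last by rewrite mul0r.
  by rewrite hU ?mulr0 // (leq_trans hb ha).
exists (Ei n i *m U + (1%:M - Ei n i)).
  apply: upper_unitP.
    move=> a b ba; rewrite /Ei entW -/(Ei n i) EU hU // mulr0 add0r.
    have -> : (a == b) = false by apply/negbTE; rewrite neq_ltn ba orbT.
    by rewrite mulr0n subrr.
  move=> k; rewrite /Ei entW -/(Ei n i) EU eqxx /=.
  case: (leqP i k) => hk /=.
    by rewrite mul1r mulr1n subrr addr0 upper_diag_nz.
  by rewrite mul0r add0r mulr1n subr0 oner_eq0.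
move=> Y; rewrite mulmxDl mulmxBl mul1mx !mulmxA EUE.
by rewrite /Ei dg_idem subrr addr0.
Qed.

Lemma right_eq n (V : 'M[rat]_n) (j : nat) : upper_tri V -> V \in unitmx ->
  exists2 W, W \in unitmx & forall Y : 'M[rat]_n, Y *m V *m Fj n j = Y *m Fj n j *m W.
Proof.
move=> hV uV.
have VF : forall a b, (V *m Fj n j) a b = V a b * (b <= j)%:R.
  by move=> a b; rewrite dgMr.
have FVF : Fj n j *m (V *m Fj n j) = V *m Fj n j.
  apply/matrixP=> a b; rewrite dgMl VF.
  case: (leqP b j) => hb; last by rewrite !mulr0.
  case: (leqP a j) => ha; first by rewrite mul1r.
  by rewrite hV ?mulr0 ?mul0r // (leq_ltn_trans hb ha).
exists (V *m Fj n j + (1%:M - Fj n j)).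
  apply: upper_unitP.
    move=> a b ba; rewrite /Fj entW -/(Fj n j) VF hV // mul0r add0r.
    have -> : (a == b) = false by apply/negbTE; rewrite neq_ltn ba orbT.
    by rewrite mulr0n subrr.
  move=> k; rewrite /Fj entW -/(Fj n j) VF eqxx /=.
  case: (leqP k j) => hk /=.
    by rewrite mulr1 mulr1n subrr addr0 upper_diag_nz.
  by rewrite mulr0 add0r mulr1n subr0 oner_eq0.
move=> Y; rewrite mulmxDr mulmxBr mulmx1 -(mulmxA Y (Fj n j)) FVF.
by rewrite -(mulmxA Y (Fj n j)) /Fj dg_idem subrr addr0 mulmxA.
Qed.

Lemma inv_rank n (U X V : 'M[rat]_n) i j :
  upper_tri U -> U \in unitmx -> upper_tri V -> V \in unitmx ->
  \rank (Ei n i *m (U *m X *m V) *m Fj n j) = \rank (Ei n i *m X *m Fj n j).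
Proof.
move=> hU uU hV uV.
have [W1 u1 e1] := left_eq i hU uU.
have [W2 u2 e2] := right_eq j hV uV.
rewrite -(mulmxA U X V) e1 -(mulmxA W1) (rank_unitl _ u1) (mulmxA (Ei n i) X V) e2.
by rewrite (rank_unitr _ u2).
Qed.

Lemma inv_rankL n (U X : 'M[rat]_n) i j : upper_tri U -> U \in unitmx ->
  \rank (Ei n i *m (invmx U *m X) *m Fj n j) = \rank (Ei n i *m X *m Fj n j).
Proof.
move=> hU uU.
have h := inv_rank (invmx U *m X) i j hU uU (@upper1 n) (unitmx1 _ _).
by rewrite mulmx1 mulKVmx // in h; rewrite h.
Qed.

Lemma inv_rankR n (X V : 'M[rat]_n) i j : upper_tri V -> V \in unitmx ->
  \rank (Ei n i *m (X *m invmx V) *m Fj n j) = \rank (Ei n i *m X *m Fj n j).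
Proof.
move=> hV uV.
have h := inv_rank (X *m invmx V) i j (@upper1 n) (unitmx1 _ _) hV uV.
by rewrite mul1mx mulmxKV // in h; rewrite h.
Qed.

Definition cnt n (s : 'S_n) (i j : nat) :=
  #|[pred a : 'I_n | (i <= a)%N && (s a <= j)%N]|.

Lemma rank_EPF n (s : 'S_n) i j :
  \rank (Ei n i *m perm_mx s *m Fj n j) = cnt s i j.
Proof. exact: rank_perm. Qed.

Lemma cnt_split n (s : 'S_n) (a : 'I_n) j :
  cnt s a j = ((s a <= j)%N + cnt s a.+1 j)%N.
Proof.
rewrite /cnt (cardD1 a) inE leqnn /=; congr (_ + _)%N.
apply: eq_card => x; rewrite !inE /=; case: (x =P a) => [->|hx] /=; first by rewrite ltnn.
rewrite ltn_neqAle; have -> : (val a != val x) by apply/eqP => h; apply: hx; apply: val_inj.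
by [].
Qed.

Lemma perm_det n (s t : 'S_n) :
  (forall i j, cnt s i j = cnt t i j) -> s = t.
Proof.
move=> h; apply/permP => a.
have key : forall j, (s a <= j)%N = (t a <= j)%N.
  move=> j; have := h a j; rewrite !cnt_split h.
  by case: (s a <= j)%N; case: (t a <= j)%N => // /eqP; rewrite eqn_add2r.
apply/val_inj/eqP; rewrite eqn_leq.
by rewrite -key leqnn key leqnn.
Qed.

End Helpers2.

Lemma natb_neq0 (b : bool) : (b%:R != 0 :> rat) = b.
Proof. by case: b; rewrite ?oner_eq0 ?eqxx. Qed.

Theorem mainTheorem3 (n : nat) (phi : 'M[nat]_n)
  (hlow : lower_tri_nat phi)
  (hdet : \det (cartanQ phi) = 1 \/ \det (cartanQ phi) = -1)
  (U1 Q U2 : 'M[rat]_n) (hQ : bruhat_decomp (cartanQ phi) U1 Q U2)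
  (V1 P V2 : 'M[rat]_n) (hP : bruhat_decomp (coxeter phi) V1 P V2)
  (pA : 'S_n) (hpA : is_col_perm P pA) :
  is_row_perm Q pA.
Proof.
case: hQ => [[hU1 uU1] [hU2 uU2] /existsP[q /eqP eQ] eC].
case: hP => [[hV1 uV1] [hV2 uV2] /existsP[p /eqP eP] eX].
set C := cartanQ phi in hdet eC.
have uC : C \in unitmx.
  by rewrite unitmxE unitfE; case: hdet => ->; rewrite ?oppr_eq0 oner_eq0.
have hCT : upper_tri C^T.
  by move=> a b ba; rewrite /C /cartanQ !mxE hlow.
have uCT : C^T \in unitmx by rewrite unitmx_tr.
set Y := invmx U2 *m perm_mx q^-1 *m invmx U1.
have YC : Y *m C = 1%:M.
  rewrite eC eQ /Y !mulmxA (mulmxKV uU1) -(mulmxA _ (perm_mx q^-1)).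
  by rewrite -perm_mxM mulVg perm_mx1 mulmx1 mulVmx.
have iC : invmx C = Y by rewrite -[invmx C]mul1mx -YC mulmxK.
have hc : forall i j, cnt p i j = cnt q^-1 i j.
  move=> i j; rewrite -!rank_EPF -eP -(inv_rank P i j hV1 uV1 hV2 uV2) -eX.
  rewrite /coxeter -/C iC mulmxN mulNmx mxrank_opp.
  rewrite -[C^T *m Y](mulmx1) (inv_rank _ i j hCT uCT (@upper1 n) (unitmx1 _ _)).
  by rewrite /Y (inv_rankR _ _ _ hU1 uU1) (inv_rankL _ _ _ hU2 uU2).
have pq := perm_det hc.
move=> a b; rewrite eQ perm_mxE' natb_neq0.
have := hpA a b; rewrite eP perm_mxE' natb_neq0 pq => <-.
by apply/eqP/eqP => [<-|<-]; rewrite ?permK ?permKV.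
Qed.
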